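(* Let $w\in\mathcal L_n$ have a valid step $q$ in $\mathcal L$. If for some $1\le i<j\le q$ one has $(w^{q\ast2})_{[i,i+n-1]}=(w^{q\ast 2})_{[j,j+n-1]}$, then $j-i$ is a valid step for $w$ in $\mathcal L$. Consequently, if $q$ is the minimal step for $w$, the words $(w^{q\ast 2})_{[i,i+n-1]}$, $1\le i\le q$, are pairwise distinct.
   Context: $\mathcal L$ is a language over a finite alphabet $\mathcal A$ (nonempty finite words, containing $\mathcal A$, closed under subwords, every word extendable on both sides), $\mathcal L_n$ its words of length $n$. For $n\ge 2$, $w\in\mathcal A^n$ and integer $1\le q\le n/2$ with $w_{[q+1,n]}=w_{[1,n-q]}$, $w^{q\ast r}$ is the word of length $n+(r-1)q$ with $(w^{q\ast r})_{[q(i-1)+1,q(i-1)+n]}=w$ for $1\le i\le r$; $q$ is a valid step for $w$ in $\mathcal L$ if moreover $w^{q\ast 2}\in\mathcal L$. The minimal step is the least valid step. *)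

(* Defs.v *)
From mathcomp Require Import all_boot.
Set Implicit Arguments. Unset Strict Implicit. Unset Printing Implicit Defensive.

Definition is_language (A : finType) (L : seq A -> Prop) : Prop :=
  [/\ (forall w, L w -> 0 < size w),
      (forall a : A, L [:: a]),
      (forall u x v, L (u ++ x ++ v) -> 0 < size x -> L x)
    & (forall w, L w -> exists a b : A, L (a :: w ++ [:: b]))].

(* 1-indexed factor w_[i,j] (i <= j) *)
Definition subword (A : Type) (w : seq A) (i j : nat) : seq A :=
  take (j.+1 - i) (drop i.-1 w).

(* w^{q*r}: r-1 copies of the prefix of length q followed by w; when
   w_[q+1,n] = w_[1,n-q] this is the word of length n+(r-1)q all of whose
   windows at positions q(i-1)+1, 1<=i<=r, are equal to w. *)
Definition qpow (A : Type) (w : seq A) (q r : nat) : seq A :=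
  flatten (nseq r.-1 (take q w)) ++ w.

Definition valid_step (A : Type) (L : seq A -> Prop) (w : seq A) (q : nat) : Prop :=
  [/\ 1 <= q, q <= (size w)./2,
      subword w q.+1 (size w) = subword w 1 (size w - q)
    & L (qpow w q 2)].

Definition minimal_step (A : Type) (L : seq A -> Prop) (w : seq A) (q : nat) : Prop :=
  valid_step L w q /\ (forall q', valid_step L w q' -> q <= q').

(* Main.v *)
Require Import Defs.
From mathcomp Require Import all_boot.
From mathcomp Require Import zify.

Lemma per_mod (A : Type) (x0 : A) (w : seq A) q : 0 < q ->
  (forall k, k + q < size w -> nth x0 w (k + q) = nth x0 w k) ->
  forall k, k < size w -> nth x0 w k = nth x0 w (k %% q).
Proof.
move=> q0 hp k; elim/ltn_ind: k => k IH hk.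
case: (ltnP k q) => hkq; first by rewrite modn_small.
have -> : k = (k - q) + q by rewrite subnK.
rewrite modnDr hp; last by rewrite subnK.
by apply: IH; lia.
Qed.

Lemma subword_nth (A : Type) (x0 : A) (s : seq A) i m k : 1 <= i -> k < m ->
  i - 1 + k < size s ->
  nth x0 (subword s i (i + m - 1)) k = nth x0 s (i - 1 + k).
Proof.
move=> hi hk hs; rewrite /subword nth_take; last by lia.
by rewrite nth_drop; congr nth; lia.
Qed.

Lemma period_subword (A : Type) (x0 : A) (w : seq A) p : p <= size w ->
  (forall k, k + p < size w -> nth x0 w (k + p) = nth x0 w k) ->
  subword w p.+1 (size w) = subword w 1 (size w - p).
Proof.
move=> hp hper; rewrite /subword subSS subn1 /= drop0.
apply: (@eq_from_nth _ x0).
  rewrite !size_take !size_drop ltnn; case: ltnP; lia.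
move=> k; rewrite size_take size_drop ltnn => hk.
rewrite nth_take; last by lia.
rewrite nth_take; last by lia.
rewrite !nth_drop /= addnC hper //; lia.
Qed.

Lemma part1 (A : finType) (L : seq A -> Prop) (n : nat) (w : seq A) (q : nat) :
  is_language L -> size w = n -> valid_step L w q ->
  (forall i j, 1 <= i -> i < j -> j <= q ->
     subword (qpow w q 2) i (i + n - 1) = subword (qpow w q 2) j (j + n - 1) ->
     valid_step L w (j - i)).
Proof.
move=> [_ _ hsub _] hn [hq1 hqn hsw hLW] i j hi hij hjq heq.
case: w hn hsw hLW heq hqn => [|x0 w'] hn hsw hLW heq hqn.
  by move: hq1 hqn => /= h1 h2; have := leq_trans h1 h2.
set w := x0 :: w' in hn hsw hLW heq hqn *.
have hqn3 : q.*2 <= n by rewrite -geq_half_double -hn.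
rewrite -muln2 in hqn3.
have hqn2 : q <= n by lia.
have hperq : forall k, k + q < size w -> nth x0 w (k + q) = nth x0 w k.
  move=> k hk.
  have hw' : size w = (size w').+1 by [].
  move: hsw; rewrite /subword subSS subn1 /= ?drop0 => hsw.
  have := congr1 (fun s => nth x0 s k) hsw => /=.
  rewrite nth_take; last by lia.
  rewrite nth_take; last by lia.
  by rewrite nth_drop addnC.
pose f k := nth x0 w (k %% q).
have hwf : forall k, k < n -> nth x0 w k = f k.
  by move=> k hk; apply: per_mod => //; rewrite hn.
set W := qpow w q 2.
have hW : W = take q w ++ w by rewrite /W /qpow /= cats0.
have hsW : size W = q + n by rewrite hW size_cat size_take hn; case: ltnP; lia.
have hWf : forall k, k < n + q -> nth x0 W k = f k.
  move=> k hk; rewrite hW nth_cat size_take hn.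
  have -> : (q < n) = true by lia.
  case: ltnP => hkq.
    by rewrite nth_take // hwf; [|lia].
  rewrite hwf; last by lia.
  by rewrite /f -(modnDr (k - q)) subnK.
have fq : forall m, f (m + q) = f m by move=> m; rewrite /f modnDr.
set p := j - i.
have hwin : forall k, k < n -> f (i - 1 + k) = f (i - 1 + k + p).
  move=> k hk.
  have := congr1 (fun s => nth x0 s k) heq => /=.
  change (qpow w q 2) with W in heq.
  rewrite !subword_nth //; try lia; try (rewrite hsW; lia).
  rewrite !hWf; try lia.
  by move=> ->; congr f; lia.
have fp : forall m, f m = f (m + p).
  move=> m.
  have -> : f m = f (m %% q) by rewrite /f modn_mod.
  have -> : f (m + p) = f (m %% q + p) by rewrite /f modnDml.
  have hmq : m %% q < q by rewrite ltn_mod; lia.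
  move: (m %% q) hmq => r hr.
  case: (leqP (i - 1) r) => hr2.
    have /hwin : r - (i - 1) < n by lia.
    by have -> : i - 1 + (r - (i - 1)) = r by lia.
  have /hwin : r + q - (i - 1) < n by lia.
  have -> : i - 1 + (r + q - (i - 1)) = r + q by lia.
  by rewrite fq (_ : r + q + p = (r + p) + q) ?fq //; lia.
have hperp : forall k, k + p < size w -> nth x0 w (k + p) = nth x0 w k.
  move=> k; rewrite hn => hk; rewrite !hwf -?fp //; lia.
have hp1 : 0 < p by rewrite /p; lia.
have hpq : p < q by rewrite /p; lia.
split.
- lia.
- rewrite hn geq_half_double -muln2; lia.
- apply: (@period_subword _ x0) => //.
  rewrite hn /p; lia.
- have -> : qpow w p 2 = take (n + p) W.
    apply: (@eq_from_nth _ x0).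
      rewrite /qpow /= size_cat !size_take hsW hn.
      rewrite cats0 size_take hn.
      have -> : (p < n) = true by lia.
      have -> : (n + p < q + n) = true by lia.
      by rewrite addnC.
    move=> k; rewrite /qpow /= cats0 size_cat size_take hn => hk.
    have hpn : (p < n) = true by lia.
    rewrite hpn in hk.
    have hk' : k < n + p by lia.
    rewrite nth_take // hWf; last by lia.
    rewrite nth_cat size_take hn.
    have -> : (p < n) = true by lia.
    case: ltnP => hkp.
      by rewrite nth_take // hwf //; lia.
    rewrite hwf; last by lia.
    by rewrite fp subnK.
  apply: (hsub [::] _ (drop (n + p) W)).
    by rewrite /= cat_take_drop.
  rewrite size_take hsW.
  have -> : (n + p < q + n) = true by lia.
  lia.
Qed.

Theorem mainTheorem12 (A : finType) (L : seq A -> Prop) (n : nat) (w : seq A) (q : nat) :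
  is_language L -> 2 <= n -> size w = n -> L w -> valid_step L w q ->
  (forall i j, 1 <= i -> i < j -> j <= q ->
     subword (qpow w q 2) i (i + n - 1) = subword (qpow w q 2) j (j + n - 1) ->
     valid_step L w (j - i)) /\
  (minimal_step L w q ->
     forall i j, 1 <= i <= q -> 1 <= j <= q -> i != j ->
       subword (qpow w q 2) i (i + n - 1) != subword (qpow w q 2) j (j + n - 1)).
Proof.
move=> hL h2 hn hw hv.
have P1 := @part1 _ _ _ _ _ hL hn hv.
split => // [[_ hmin]] i j /andP[hi1 hiq] /andP[hj1 hjq] hij.
apply/eqP => heq.
case: (ltngtP i j) => hc.
- have := hmin _ (P1 i j hi1 hc hjq heq); lia.
- have := hmin _ (P1 j i hj1 hc hiq (esym heq)); lia.
- by rewrite hc eqxx in hij.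
Qed.
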